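(* Let $N_o>0$, $\alpha>0$, $\beta>0$ and $\eta(d)=\frac{1}{(1+d)^\alpha}$. If $C,D>0$ satisfy $$(1+C)^\alpha\sum_{k=1}^{\infty}\frac{6k+3}{(1+kC(1+D/2))^\alpha}<\frac1\beta,$$ then $(C,D)$ ensures the SINR$_\beta$ criterion under this propagation model.
   Context: $\mathrm{SINR}(t,r,T,P,N_o,\eta)=\dfrac{P\eta(\|t-r\|)}{N_o+\sum_{t'\in T}P\eta(\|t'-r\|)}$ for $t,r\in\mathbb{R}^2$, $T$ a finite subset of $\mathbb{R}^2$, $P>0$. $(t,r,T)$ satisfies DC$(C,D)$ if $\|t-r\|\le C$ and $\|t'-t''\|\ge C(2+D)$ for all distinct $t',t''\in T\cup\{t\}$. The pair $(C,D)$ ensures the SINR$_\beta$ criterion (given $N_o$ and $\eta$) if there exists $P>0$ such that every triple $(t,r,T)$ satisfying DC$(C,D)$ has $\mathrm{SINR}(t,r,T,P,N_o,\eta)\ge\beta$. *)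

(* Defs.v *)
From Stdlib Require Import Reals List.
From Coquelicot Require Import Coquelicot.
Import ListNotations.
Open Scope R_scope.

Definition pt := (R * R)%type.
Definition dist2 (p q : pt) : R :=
  sqrt ((fst p - fst q) ^ 2 + (snd p - snd q) ^ 2).

(* Sum of f over a finite set represented by a duplicate-free list. *)
Definition lsum (f : pt -> R) (T : list pt) : R :=
  fold_right (fun x acc => f x + acc) 0 T.

Definition SINR (t r : pt) (T : list pt) (P No : R) (eta : R -> R) : R :=
  P * eta (dist2 t r) / (No + lsum (fun t' => P * eta (dist2 t' r)) T).

(* (t,r,T) satisfies DC(C,D).  T is a finite set of (other) transmitters:
   a duplicate-free list not containing t. *)
Definition DC (C D : R) (t r : pt) (T : list pt) : Prop :=
  NoDup T /\ ~ In t T /\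
  dist2 t r <= C /\
  (forall t' t'', In t' (t :: T) -> In t'' (t :: T) -> t' <> t'' ->
     C * (2 + D) <= dist2 t' t'').

Definition ensures_SINR (beta No : R) (eta : R -> R) (C D : R) : Prop :=
  exists P : R, 0 < P /\
    forall (t r : pt) (T : list pt), DC C D t r T -> beta <= SINR t r T P No eta.

Definition eta_pow (alpha : R) (d : R) : R := / Rpower (1 + d) alpha.

(* Main.v *)
Require Import Defs.
From Stdlib Require Import Reals List Lra Psatz ZArith.
From Coquelicot Require Import Coquelicot.
Open Scope R_scope.

Lemma sqrt_tri (x1 y1 x2 y2 : R) :
  sqrt ((x1+x2)^2+(y1+y2)^2) <= sqrt (x1^2+y1^2) + sqrt (x2^2+y2^2).
Proof.
  set (B := x1^2+y1^2). set (Cc := x2^2+y2^2).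
  assert (HB : 0 <= B) by (unfold B; nra).
  assert (HC : 0 <= Cc) by (unfold Cc; nra).
  pose proof (sqrt_pos B). pose proof (sqrt_pos Cc).
  pose proof (sqrt_sqrt B HB). pose proof (sqrt_sqrt Cc HC).
  assert (Hcs : x1*x2+y1*y2 <= sqrt B * sqrt Cc).
  { assert (Hsq: (x1*x2+y1*y2)^2 <= (sqrt B * sqrt Cc)^2).
    { replace ((sqrt B * sqrt Cc)^2) with (B*Cc) by (rewrite Rpow_mult_distr; simpl; nra).
      unfold B, Cc. pose proof (pow2_ge_0 (x1*y2-x2*y1)). nra. }
    pose proof (Rmult_le_pos _ _ H H0). nra. }
  rewrite <- (sqrt_square (sqrt B + sqrt Cc)) by lra.
  apply sqrt_le_1_alt. unfold B, Cc in *. nra.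
Qed.

Lemma dist2_tri p q z : dist2 p z <= dist2 p q + dist2 q z.
Proof.
  unfold dist2.
  replace (fst p - fst z) with ((fst p - fst q) + (fst q - fst z)) by ring.
  replace (snd p - snd z) with ((snd p - snd q) + (snd q - snd z)) by ring.
  apply sqrt_tri.
Qed.

Lemma dist2_sym p q : dist2 p q = dist2 q p.
Proof. unfold dist2. f_equal. ring. Qed.

Lemma dist2_pos p q : 0 <= dist2 p q.
Proof. apply sqrt_pos. Qed.

Lemma dist2_lt (x y : R) (p : pt) a : 0 <= a ->
  (x - fst p)^2 + (y - snd p)^2 < a^2 -> dist2 (x,y) p < a.
Proof.
  intros Ha H. destruct p as [px py]. unfold dist2 in *; simpl in *.
  rewrite <- (sqrt_square a) by lra. apply sqrt_lt_1_alt. pose proof (pow2_ge_0 (x-px)). pose proof (pow2_ge_0 (y-py)). split; [lra|]. nra.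
Qed.

Lemma dist2_le_sq (x y : R) (p : pt) a : 
  dist2 (x,y) p <= a -> (x - fst p)^2 + (y - snd p)^2 <= a^2.
Proof.
  intros H. destruct p as [px py]. unfold dist2 in H. cbn [fst snd] in *.
  set (u := (x - px) ^ 2 + (y - py) ^ 2) in *.
  assert (0 <= u) by (unfold u; pose proof (pow2_ge_0 (x-px)); pose proof (pow2_ge_0 (y-py)); lra).
  pose proof (sqrt_pos u). pose proof (sqrt_sqrt u H0).
  assert (u <= a*a) by nra. simpl. lra.
Qed.

Lemma dist2_x_le p q : Rabs (fst p - fst q) <= dist2 p q.
Proof.
  unfold dist2. rewrite <- sqrt_Rsqr_abs. apply sqrt_le_1_alt. unfold Rsqr.
  pose proof (pow2_ge_0 (snd p - snd q)). simpl. lra.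
Qed.

Lemma lsum_split3 (g : pt -> R) (P Q : pt -> bool) (l : list pt) :
  (forall p, In p l -> P p = true -> Q p = true -> False) ->
  (forall p, In p l -> P p = false -> Q p = false -> g p = 0) ->
  lsum g l = lsum g (filter P l) + lsum g (filter Q l).
Proof.
  induction l as [|a l IH]; intros H1 H2; simpl. lra.
  rewrite IH; [| intros; eapply H1; eauto; right; auto | intros; eapply H2; eauto; right; auto].
  destruct (P a) eqn:Ea; destruct (Q a) eqn:Eb; simpl.
  - exfalso; eapply H1; eauto; left; auto.
  - lra. - lra.
  - rewrite (H2 a); [lra| left; auto | auto | auto].
Qed.

Definition rle (x y : R) : bool := if Rle_dec x y then true else false.
Lemma rle_true x y : rle x y = true <-> x <= y.
Proof. unfold rle; destruct (Rle_dec x y); split; intros; auto; try discriminate; contradiction. Qed.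
Lemma rle_false x y : rle x y = false <-> ~ x <= y.
Proof. unfold rle; destruct (Rle_dec x y); split; intros; auto; try discriminate; contradiction. Qed.

Lemma intervals_aux (lo hi : pt -> R) n : forall (l : list pt) L U,
  (length l <= n)%nat ->
  NoDup l -> (forall p, In p l -> lo p <= hi p) ->
  (forall p, In p l -> lo p < hi p -> L <= lo p /\ hi p <= U) ->
  (forall p q, In p l -> In q l -> p <> q -> lo p < hi p -> lo q < hi q ->
     hi p <= lo q \/ hi q <= lo p) ->
  L <= U -> lsum (fun p => hi p - lo p) l <= U - L.
Proof.
  induction n; intros l L U Hlen Hnd Hle Hin Hdis HLU.
  - destruct l; simpl in *; [lra| lia].
  - destruct l as [|h rest]; simpl; [lra|].
    simpl in Hlen. inversion Hnd as [|h' rest' Hnotin Hnd' ]; subst.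
    assert (Hlen' : (length rest <= n)%nat) by lia.
    destruct (Rle_lt_or_eq_dec _ _ (Hle h (or_introl eq_refl))) as [Hlt|Heq].
    + rewrite (lsum_split3 _ (fun p => rle (hi p) (lo h)) (fun p => rle (hi h) (lo p))).
      * assert (A1 : lsum (fun p => hi p - lo p) (filter (fun p => rle (hi p) (lo h)) rest) <= lo h - L).
        { apply IHn.
          - eapply Nat.le_trans; [apply filter_length_le| exact Hlen'].
          - apply NoDup_filter; auto.
          - intros p Hp; apply filter_In in Hp; apply Hle; right; tauto.
          - intros p Hp Hlp; apply filter_In in Hp; destruct Hp as [Hp Hb].
            apply rle_true in Hb. split; [apply (Hin p); auto; right; auto | auto].
          - intros p q Hp Hq; apply filter_In in Hp; apply filter_In in Hq.
            apply Hdis; right; tauto.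
          - apply (Hin h); auto; left; auto. }
        assert (A2 : lsum (fun p => hi p - lo p) (filter (fun p => rle (hi h) (lo p))  rest) <= U - hi h).
        { apply IHn.
          - eapply Nat.le_trans; [apply filter_length_le| exact Hlen'].
          - apply NoDup_filter; auto.
          - intros p Hp; apply filter_In in Hp; apply Hle; right; tauto.
          - intros p Hp Hlp; apply filter_In in Hp; destruct Hp as [Hp Hb].
            apply rle_true in Hb. split; [auto | apply (Hin p); auto; right; auto].
          - intros p q Hp Hq; apply filter_In in Hp; apply filter_In in Hq.
            apply Hdis; right; tauto.
          - apply (Hin h); auto; left; auto. }
        lra.
      * intros p Hp H1 H2. apply rle_true in H1; apply rle_true in H2.
        pose proof (Hle p (or_intror Hp)). lra.
      * intros p Hp H1 H2. apply rle_false in H1; apply rle_false in H2.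
        destruct (Rle_lt_or_eq_dec _ _ (Hle p (or_intror Hp))) as [Hp'|Hp']; [|lra].
        assert (p <> h) by (intro; subst; contradiction).
        destruct (Hdis p h (or_intror Hp) (or_introl eq_refl) H Hp' Hlt); lra.
    + assert (lsum (fun p => hi p - lo p) rest <= U - L).
      { apply IHn; auto.
        - intros p Hp; apply Hle; right; auto.
        - intros p Hp; apply Hin; right; auto.
        - intros p q Hp Hq; apply Hdis; right; auto. }
      lra.
Qed.

Definition g1 (u : R) := sqrt (1 - u^2).
Definition w (a u : R) := a * g1 (u / a).

Lemma w_nonneg a u : 0 <= a -> 0 <= w a u.
Proof. intros; unfold w, g1. pose proof (sqrt_pos (1 - (u/a)^2)). nra. Qed.

Lemma w_pos a u : 0 < a -> 0 < w a u -> u^2 < a^2.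
Proof.
  intros Ha H. unfold w, g1 in H.
  destruct (Rlt_or_le 0 (1 - (u/a)^2)) as [H1|H1].
  - assert (u^2 = (u/a)^2 * a^2) by (field; lra).
    assert (0 < a^2) by nra. nra.
  - rewrite (sqrt_neg_0 _ H1) in H. lra.
Qed.

Lemma w_sq a u : 0 < a -> u^2 <= a^2 -> (w a u)^2 = a^2 - u^2.
Proof.
  intros Ha H. unfold w, g1.
  assert (Hn : 0 <= 1 - (u/a)^2).
  { assert ((u/a)^2 = u^2 / a^2) by (field; lra).
    rewrite H0. assert (0 < a^2) by nra.
    assert (u^2/a^2 <= 1). { apply (Rmult_le_reg_r (a^2)); auto. field_simplify; lra. }
    lra. }
  rewrite Rpow_mult_distr. rewrite pow2_sqrt by auto. field. lra.
Qed.

Lemma lsum_ext (f g : pt -> R) l : (forall p, In p l -> f p = g p) -> lsum f l = lsum g l.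
Proof.
  induction l; intros H; simpl; auto.
  rewrite H by (left; auto). rewrite IHl; auto. intros; apply H; right; auto.
Qed.

Lemma slice (a rho : R) (Q : list pt) (r : pt) (x : R) :
  0 < a -> 0 <= rho -> NoDup Q ->
  (forall p q, In p Q -> In q Q -> p <> q -> 2 * a <= dist2 p q) ->
  (forall p, In p Q -> dist2 p r <= rho) ->
  lsum (fun p => 2 * w a (x - fst p)) Q <= 2 * w (rho + a) (x - fst r).
Proof.
  intros Ha Hrho Hnd Hsep Hin.
  set (W := w (rho + a) (x - fst r)).
  assert (HW : 0 <= W) by (apply w_nonneg; lra).
  set (lo := fun p : pt => snd p - w a (x - fst p)).
  set (hi := fun p : pt => snd p + w a (x - fst p)).
  assert (E : lsum (fun p => 2 * w a (x - fst p)) Q = lsum (fun p => hi p - lo p) Q).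
  { apply lsum_ext; intros; unfold hi, lo; ring. }
  rewrite E.
  replace (2 * W) with ((snd r + W) - (snd r - W)) by ring.
  assert (Hlohi : forall p, lo p < hi p -> 0 < w a (x - fst p)) by (intros p; unfold lo, hi; lra).
  apply (intervals_aux lo hi (length Q)); auto.
  - intros p _. unfold lo, hi. pose proof (w_nonneg a (x - fst p)); lra.
  - intros p Hp Hlt. apply Hlohi in Hlt.
    set (s := w a (x - fst p)) in *.
    pose proof (w_pos _ _ Ha Hlt) as Hu.
    pose proof (w_sq _ _ Ha (Rlt_le _ _ Hu)) as Hs. fold s in Hs.
    assert (Hv : forall y, dist2 (x, y) p <= a -> (x - fst r)^2 + (y - snd r)^2 <= (rho + a)^2).
    { intros y Hy. apply dist2_le_sq. pose proof (dist2_tri (x,y) p r). pose proof (Hin p Hp). lra. }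
    assert (Hd : forall y, (y - snd p)^2 = s^2 -> dist2 (x, y) p <= a).
    { intros y Hy. unfold dist2; cbn [fst snd]. rewrite Hy, Hs.
      replace ((x - fst p) ^ 2 + (a ^ 2 - (x - fst p) ^ 2)) with (a*a) by ring.
      rewrite sqrt_square; lra. }
    assert (Hvr : (x - fst r)^2 <= (rho+a)^2).
    { pose proof (Hv (snd p + s) (Hd (snd p + s) ltac:(ring))). pose proof (pow2_ge_0 (snd p + s - snd r)). lra. }
    pose proof (w_sq (rho+a) (x - fst r) ltac:(lra) Hvr) as HWs. fold W in HWs.
    pose proof (Hv (snd p + s) (Hd (snd p + s) ltac:(ring))) as H1.
    pose proof (Hv (snd p - s) (Hd (snd p - s) ltac:(ring))) as H2.
    unfold lo, hi; fold s. split; nra.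
  - intros p q Hp Hq Hpq Hp' Hq'.
    destruct (Rle_or_lt (hi p) (lo q)) as [H|H1]; [left; auto|].
    destruct (Rle_or_lt (hi q) (lo p)) as [H|H2]; [right; auto|].
    exfalso.
    set (y := (Rmax (lo p) (lo q) + Rmin (hi p) (hi q)) / 2).
    assert (Hy : lo p < y < hi p /\ lo q < y < hi q).
    { unfold y, Rmax, Rmin. destruct (Rle_dec (lo p) (lo q)); destruct (Rle_dec (hi p) (hi q)); lra. }
    assert (Hz : forall p0, lo p0 < y < hi p0 -> dist2 (x, y) p0 < a).
    { intros p0 Hy0. 
      assert (Hl0 : 0 < w a (x - fst p0)) by (apply Hlohi; lra).
      pose proof (w_sq _ _ Ha (Rlt_le _ _ (w_pos _ _ Ha Hl0))) as Hs0.
      apply dist2_lt; [lra|]. unfold lo, hi in Hy0.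
      assert ((y - snd p0)^2 < (w a (x - fst p0))^2) by nra. lra. }
    pose proof (Hz p (proj1 Hy)). pose proof (Hz q (proj2 Hy)).
    pose proof (dist2_tri p (x,y) q). rewrite (dist2_sym p (x,y)) in H3.
    pose proof (Hsep p q Hp Hq Hpq). lra.
  - lra.
Qed.
Lemma g1_cont x : continuous g1 x.
Proof.
  unfold g1. apply continuous_sqrt_comp.
  apply (ex_derive_continuous (K:=R_AbsRing) (V:=R_NormedModule)). auto_derive. auto.
Qed.

Lemma w2_cont a c x : continuous (fun x => 2 * w a (x - c)) x.
Proof.
  unfold w, g1. apply (continuous_mult (fun _ => 2)). apply continuous_const.
  apply (continuous_mult (fun _ => a)). apply continuous_const.
  apply continuous_sqrt_comp. apply (ex_derive_continuous (K:=R_AbsRing) (V:=R_NormedModule)). auto_derive. auto.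
Qed.

Lemma ex_g1 A B : ex_RInt g1 A B.
Proof. apply (ex_RInt_continuous (V:=R_CompleteNormedModule)); intros; apply g1_cont. Qed.

Lemma ex_w2 a c A B : ex_RInt (fun x => 2 * w a (x - c)) A B.
Proof. apply (ex_RInt_continuous (V:=R_CompleteNormedModule)); intros; apply w2_cont. Qed.

Definition I1 := RInt g1 (-1) 1.

Lemma g1_zero u : 1 <= Rabs u -> g1 u = 0.
Proof.
  intros H. unfold g1. apply sqrt_neg_0.
  assert (1 <= u^2). { rewrite <- (pow2_abs u). nra. } lra.
Qed.

Lemma RInt_zero_g1 m M : m <= M -> (M <= -1 \/ 1 <= m) -> RInt g1 m M = 0.
Proof.
  intros Hm H.
  rewrite (RInt_ext g1 (fun _ => 0)).
  - rewrite RInt_const. change ((M - m) * 0 = 0). ring.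
  - intros x Hx. rewrite Rmin_left in Hx by lra. rewrite Rmax_right in Hx by lra.
    apply g1_zero. destruct H; [rewrite Rabs_left | rewrite Rabs_right]; lra.
Qed.

Lemma RInt_g1_big m M : m <= -1 -> 1 <= M -> RInt g1 m M = I1.
Proof.
  intros Hm HM. unfold I1.
  rewrite <- (RInt_Chasles g1 m (-1) M) by apply ex_g1.
  rewrite <- (RInt_Chasles g1 (-1) 1 M) by apply ex_g1.
  rewrite (RInt_zero_g1 m (-1)) by lra. rewrite (RInt_zero_g1 1 M) by lra.
  change (0 + (RInt g1 (-1) 1 + 0) = RInt g1 (-1) 1). ring.
Qed.

Lemma I1_pos : 0 < I1.
Proof.
  unfold I1.
  rewrite <- (RInt_Chasles g1 (-1) (-1/2) 1) by apply ex_g1.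
  rewrite <- (RInt_Chasles g1 (-1/2) (1/2) 1) by apply ex_g1.
  assert (0 <= RInt g1 (-1) (-1/2)).
  { apply RInt_ge_0; [lra| apply ex_g1| intros; apply sqrt_pos]. }
  assert (0 <= RInt g1 (1/2) 1).
  { apply RInt_ge_0; [lra| apply ex_g1| intros; apply sqrt_pos]. }
  assert (RInt (fun _ => 1/2) (-1/2) (1/2) <= RInt g1 (-1/2) (1/2)).
  { apply RInt_le; [lra | apply ex_RInt_const | apply ex_g1 |].
    intros x Hx. unfold g1. replace (1/2) with (sqrt (1/2 * (1/2))) at 1 by (rewrite sqrt_square; lra).
    apply sqrt_le_1_alt. nra. }
  rewrite RInt_const in H1. change (scal (1/2 - -1/2) (1/2)) with ((1/2 - -1/2) * (1/2)) in H1.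
  change (plus (RInt g1 (-1) (-1/2)) (plus (RInt g1 (-1/2) (1/2)) (RInt g1 (1/2) 1)) > 0).
  change (RInt g1 (-1) (-1/2) + (RInt g1 (-1/2) (1/2) + RInt g1 (1/2) 1) > 0). lra.
Qed.

Lemma int_w2 a c A B : 0 < a -> A <= c - a -> c + a <= B ->
  RInt (fun x => 2 * w a (x - c)) A B = 2 * a^2 * I1.
Proof.
  intros Ha HA HB.
  rewrite (RInt_ext _ (fun x => scal (2 * a^2) (scal (/a) (g1 (/a * x + (- c / a)))))).
  2:{ intros x _. unfold w. change (2 * (a * g1 ((x - c) / a)) = 2 * a^2 * (/a * g1 (/a * x + (- c / a)))).
      replace (/a * x + - c / a) with ((x - c)/a) by (field; lra). field. lra. }
  rewrite (RInt_scal (V:=R_CompleteNormedModule)).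
  2:{ apply (ex_RInt_continuous (V:=R_CompleteNormedModule)). intros z _. apply (continuous_scal_r (K:=R_AbsRing) (V:=R_NormedModule)).
      apply (continuous_comp (fun x => /a * x + - c/a) g1). 2: apply g1_cont.
      apply (ex_derive_continuous (K:=R_AbsRing) (V:=R_NormedModule)). auto_derive. auto. }
  rewrite (RInt_comp_lin (V:=R_CompleteNormedModule)) by apply ex_g1.
  rewrite RInt_g1_big.
  - reflexivity.
  - apply (Rmult_le_reg_l a); auto. field_simplify; try lra. 
  - apply (Rmult_le_reg_l a); auto. field_simplify; try lra.
Qed.

Lemma RInt_lsum (h : pt -> R -> R) Q A B : (forall p, ex_RInt (h p) A B) ->
  ex_RInt (fun x => lsum (fun p => h p x) Q) A B /\
  RInt (fun x => lsum (fun p => h p x) Q) A B = lsum (fun p => RInt (h p) A B) Q.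
Proof.
  intros He. induction Q as [|q Q IH]; simpl.
  - split. apply (ex_RInt_const (V:=R_NormedModule)).
    rewrite RInt_const. change ((B - A) * 0 = 0). ring.
  - destruct IH as [IH1 IH2]. split.
    + apply (ex_RInt_plus (V:=R_NormedModule) (h q) (fun x => lsum (fun p => h p x) Q)); auto.
    + rewrite (RInt_plus (V:=R_CompleteNormedModule) (h q) (fun x => lsum (fun p => h p x) Q)); auto.
      rewrite IH2. reflexivity.
Qed.

Lemma lsum_const c Q : lsum (fun _ => c) Q = INR (length Q) * c.
Proof. induction Q; simpl lsum; simpl length. simpl; ring. rewrite IHQ, S_INR. ring. Qed.

Lemma packing (a rho : R) (Q : list pt) (r : pt) :
  0 < a -> 0 <= rho -> NoDup Q ->
  (forall p q, In p Q -> In q Q -> p <> q -> 2 * a <= dist2 p q) ->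
  (forall p, In p Q -> dist2 p r <= rho) ->
  INR (length Q) * a^2 <= (rho + a)^2.
Proof.
  intros Ha Hrho Hnd Hsep Hin.
  set (A := fst r - (rho + a)). set (B := fst r + (rho + a)).
  assert (Hle : RInt (fun x => lsum (fun p => 2 * w a (x - fst p)) Q) A B
               <= RInt (fun x => 2 * w (rho + a) (x - fst r)) A B).
  { apply RInt_le.
    - unfold A, B; lra.
    - apply (RInt_lsum (fun p x => 2 * w a (x - fst p))). intros; apply ex_w2.
    - apply ex_w2.
    - intros x _. apply slice; auto. }
  rewrite (proj2 (RInt_lsum (fun p x => 2 * w a (x - fst p)) Q A B (fun p => ex_w2 _ _ _ _))) in Hle.
  rewrite (int_w2 (rho+a)) in Hle by (unfold A, B; lra).
  rewrite (lsum_ext _ (fun _ => 2 * a^2 * I1)) in Hle.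
  2:{ intros p Hp. apply int_w2; auto.
      - pose proof (dist2_x_le p r). pose proof (Hin p Hp). unfold A. 
        pose proof (Rle_abs (fst r - fst p)). rewrite Rabs_minus_sym in H1. lra.
      - pose proof (dist2_x_le p r). pose proof (Hin p Hp). unfold B.
        pose proof (Rle_abs (fst p - fst r)). lra. }
  rewrite lsum_const in Hle. pose proof I1_pos.
  apply (Rmult_le_reg_r (2 * I1)). lra. nra.
Qed.
Lemma nat_above x : exists n, x < INR n.
Proof.
  destruct (archimed x) as [H _]. exists (Z.to_nat (up x)).
  destruct (Z_le_gt_dec 0 (up x)).
  - rewrite INR_IZR_INZ, Z2Nat.id; auto.
  - assert (IZR (up x) < 0) by (apply IZR_lt; lia). pose proof (pos_INR (Z.to_nat (up x))). lra.
Qed.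

Lemma sum_n_le' (u v : nat -> R) N : (forall n, u n <= v n) -> sum_n u N <= sum_n v N.
Proof.
  intros H. induction N. rewrite !sum_O; auto.
  rewrite !sum_Sn. change (sum_n u N + u (S N) <= sum_n v N + v (S N)). specialize (H (S N)). lra.
Qed.

Lemma lsum_le (f g : pt -> R) l : (forall p, In p l -> f p <= g p) -> lsum f l <= lsum g l.
Proof.
  induction l; intros H; simpl. lra.
  pose proof (H a (or_introl eq_refl)). assert (lsum f l <= lsum g l) by (apply IHl; intros; apply H; right; auto). lra.
Qed.

Lemma lsum_plus (f g : pt -> R) l : lsum (fun p => f p + g p) l = lsum f l + lsum g l.
Proof. induction l; simpl. ring. rewrite IHl. ring. Qed.
Lemma lsum_scal c (f : pt -> R) l : lsum (fun p => c * f p) l = c * lsum f l.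
Proof. induction l; simpl. ring. rewrite IHl. ring. Qed.

Lemma lsum_sum_n (F : nat -> pt -> R) N l :
  lsum (fun p => sum_n (fun n => F n p) N) l = sum_n (fun n => lsum (F n) l) N.
Proof.
  induction N.
  - rewrite sum_O. apply lsum_ext. intros; apply sum_O.
  - rewrite sum_Sn. rewrite (lsum_ext _ (fun p => sum_n (fun n => F n p) N + F (S N) p)).
    + rewrite lsum_plus, IHN. reflexivity.
    + intros; rewrite sum_Sn; reflexivity.
Qed.

Lemma lsum_count (b : pt -> bool) l :
  lsum (fun p => if b p then 1 else 0) l = INR (length (filter b l)).
Proof.
  induction l; simpl. reflexivity. rewrite IHl. destruct (b a); simpl length; try rewrite S_INR; ring.
Qed.

Lemma lsum_nonneg (f : pt -> R) l : (forall p, In p l -> 0 <= f p) -> 0 <= lsum f l.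
Proof.
  induction l; intros H; simpl. lra.
  pose proof (H a (or_introl eq_refl)). assert (0 <= lsum f l) by (apply IHl; intros; apply H; right; auto). lra.
Qed.

Lemma lsum_ge_elem (f : pt -> R) l p : (forall q, In q l -> 0 <= f q) -> In p l -> f p <= lsum f l.
Proof.
  induction l; intros H Hp; simpl in *. contradiction.
  destruct Hp as [<-|Hp].
  - assert (0 <= lsum f l) by (apply lsum_nonneg; intros; apply H; auto). lra.
  - pose proof (H a (or_introl eq_refl)). assert (f p <= lsum f l) by (apply IHl; auto). lra.
Qed.

Section Main.
Variable alpha a : R.
Hypothesis Halpha : 0 < alpha.
Hypothesis Ha : 0 < a.

Let f := eta_pow alpha.

Lemma Rpower_pos x y : 0 < Rpower x y.
Proof. unfold Rpower; apply exp_pos. Qed.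

Lemma f_pos x : 0 < f x.
Proof. unfold f, eta_pow. apply Rinv_0_lt_compat, Rpower_pos. Qed.

Lemma f_dec x y : 0 <= x <= y -> f y <= f x.
Proof.
  intros H. unfold f, eta_pow. apply Rinv_le_contravar. apply Rpower_pos.
  apply Rle_Rpower_l; lra.
Qed.

Definition G n := f (INR (S n) * a).
Definition Dl n := G n - G (S n).
Definition indb (d : R) n : bool := if Rlt_dec d (INR (S (S n)) * a) then true else false.
Definition ind (d : R) n : R := if indb d n then 1 else 0.
Definition Mc n := 3 * INR (S n) * INR (S n) + 6 * INR (S n).

Lemma Dl_nonneg n : 0 <= Dl n.
Proof.
  unfold Dl, G. assert (0 <= f (INR (S (S n)) * a) <= f (INR (S n) * a)); [|lra].
  split. left; apply f_pos. apply f_dec. rewrite (S_INR (S n)). pose proof (pos_INR (S n)). nra.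
Qed.

Lemma INR_SS_le n N : (n <= N)%nat -> INR (S (S n)) * a <= INR (S (S N)) * a.
Proof. intros. apply Rmult_le_compat_r; [lra|]. apply le_INR. lia. Qed.

Lemma ind_zero N d : INR (S (S N)) * a <= d -> sum_n (fun n => Dl n * ind d n) N = 0.
Proof.
  intros H. induction N.
  - rewrite sum_O. unfold ind, indb. destruct (Rlt_dec d (INR 2 * a)); [lra| change (Dl 0 * 0 = 0); ring].
  - rewrite sum_Sn. rewrite IHN.
    + unfold ind, indb. destruct (Rlt_dec d (INR (S (S (S N))) * a)); [lra|]. change (0 + Dl (S N) * 0 = 0). ring.
    + pose proof (INR_SS_le N (S N) ltac:(lia)). lra.
Qed.

Lemma per_point N d : a <= d < INR (S (S N)) * a ->
  f d <= sum_n (fun n => Dl n * ind d n) N + G (S N).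
Proof.
  revert d. induction N; intros d Hd.
  - rewrite sum_O. unfold ind, indb. destruct (Rlt_dec d (INR 2 * a)); [|lra].
    unfold Dl. replace ((G 0 - G 1) * 1 + G 1) with (G 0) by ring. unfold G.
    apply f_dec. simpl. lra.
  - rewrite sum_Sn. change (f d <= sum_n (fun n => Dl n * ind d n) N + Dl (S N) * ind d (S N) + G (S (S N))).
    unfold ind at 2, indb. destruct (Rlt_dec d (INR (S (S (S N))) * a)); [|lra].
    destruct (Rlt_or_le d (INR (S (S N)) * a)).
    + pose proof (IHN d (conj (proj1 Hd) H)). assert (Dl (S N) = G (S N) - G (S (S N))) by reflexivity. lra.
    + rewrite ind_zero by auto. unfold Dl. replace (0 + (G (S N) - G (S (S N))) * 1 + G (S (S N))) with (G (S N)) by ring.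
      unfold G. apply f_dec. split; [|auto]. pose proof (pos_INR (S (S N))). nra.
Qed.

Lemma abel N : sum_n (fun n => (6 * INR (S n) + 3) * G n) N =
  sum_n (fun n => Mc n * Dl n) N + Mc N * G (S N).
Proof.
  induction N.
  - rewrite !sum_O. unfold Mc, Dl. simpl. ring.
  - rewrite !sum_Sn. change (sum_n (fun n => (6 * INR (S n) + 3) * G n) N + (6 * INR (S (S N)) + 3) * G (S N) =
      sum_n (fun n => Mc n * Dl n) N + Mc (S N) * Dl (S N) + Mc (S N) * G (S (S N))).
    rewrite IHN. unfold Mc, Dl. rewrite (S_INR (S N)). ring.
Qed.

End Main.

Lemma count_bound C D t r T n : 0 < C -> 0 < D -> DC C D t r T ->
  lsum (fun t' => ind (C*(1+D/2)) (dist2 t' r) n) T <= Mc n.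
Proof.
  intros HC HD [Hnd [Hnt [Htr Hsep]]].
  set (a := C*(1+D/2)).
  assert (Ha : 0 < a) by (unfold a; nra).
  assert (HCa : C < a) by (unfold a; nra).
  unfold ind. rewrite lsum_count.
  set (b := fun t' => indb a (dist2 t' r) n).
  set (rho := INR (S (S n)) * a).
  assert (Hk : 1 <= INR (S n)) by (rewrite S_INR; pose proof (pos_INR n); lra).
  assert (Hrho : rho = (INR (S n) + 1) * a) by (unfold rho; rewrite (S_INR (S n)); ring).
  pose proof (packing a rho (t :: filter b T) r Ha) as P.
  assert (HP : INR (length (t :: filter b T)) * a^2 <= (rho + a)^2).
  { apply P.
    - rewrite Hrho. nra.
    - constructor. rewrite filter_In. tauto. apply NoDup_filter; auto.
    - intros p q Hp Hq Hpq. replace (2 * a) with (C * (2 + D)) by (unfold a; field).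
      apply Hsep; auto.
      + destruct Hp as [Hp|Hp]; [left; auto| right; apply filter_In in Hp; tauto].
      + destruct Hq as [Hq|Hq]; [left; auto| right; apply filter_In in Hq; tauto].
    - intros p [<-|Hp].
      + rewrite Hrho. nra.
      + apply filter_In in Hp. destruct Hp as [_ Hb]. unfold b, indb in Hb.
        destruct (Rlt_dec (dist2 p r) (INR (S (S n)) * a)); [unfold rho; lra| discriminate]. }
  simpl length in HP. rewrite S_INR in HP. rewrite Hrho in HP.
  set (m := INR (length (filter b T))) in *.
  set (k := INR (S n)) in *.
  assert (m + 1 <= (k + 2)^2).
  { apply (Rmult_le_reg_r (a^2)). nra.
    replace ((k+2)^2 * a^2) with (((k + 1) * a + a) ^ 2) by ring. lra. }
  unfold Mc; fold k. nra.
Qed.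

Lemma series_partial (u : nat -> R) s N : is_series u s -> (forall n, 0 <= u n) -> sum_n u N <= s.
Proof.
  intros Hs Hu. apply (is_lim_seq_incr_compare (sum_n u) s).
  - exact Hs.
  - intros n. rewrite sum_Sn. change (sum_n u n <= sum_n u n + u (S n)). specialize (Hu (S n)). lra.
Qed.

Theorem corollary1 (No alpha beta C D : R) :
  0 < No -> 0 < alpha -> 0 < beta -> 0 < C -> 0 < D ->
  (exists s : R,
     is_series (fun n : nat =>
        let k := INR (S n) in
        (6 * k + 3) / Rpower (1 + k * C * (1 + D / 2)) alpha) s /\
     Rpower (1 + C) alpha * s < / beta) ->
  ensures_SINR beta No (eta_pow alpha) C D.
Proof.
  intros HNo Hal Hbe HC HD [s [Hs Hq]].
  set (a := C*(1+D/2)).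
  assert (Ha : 0 < a) by (unfold a; nra).
  assert (HCa : C < a) by (unfold a; nra).
  set (q := Rpower (1 + C) alpha).
  assert (Hqp : 0 < q) by apply Rpower_pos.
  set (e := / q).
  assert (He : e = eta_pow alpha C) by reflexivity.
  assert (Hbs : beta * s < e).
  { unfold e. apply (Rmult_lt_reg_l q); auto. rewrite Rinv_r by lra.
    apply (Rmult_lt_reg_l (/beta)). apply Rinv_0_lt_compat; lra.
    replace (/ beta * (q * (beta * s))) with (q * s) by (field; lra). rewrite Rmult_1_r. exact Hq. }
  exists (beta * No / (e - beta * s)). split.
  { apply Rdiv_lt_0_compat; nra. }
  intros t r T HDC.
  set (P := beta * No / (e - beta * s)).
  assert (HPp : 0 < P) by (apply Rdiv_lt_0_compat; nra).
  assert (HPe : P * (e - beta * s) = beta * No) by (unfold P; field; lra).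
  destruct HDC as [Hnd [Hnt [Htr Hsep]]] eqn:HDCe.
  set (h := fun t' => eta_pow alpha (dist2 t' r)).
  assert (Hfar : forall t', In t' T -> a <= dist2 t' r).
  { intros t' Ht'. assert (t' <> t) by (intro; subst; contradiction).
    pose proof (Hsep t' t (or_intror Ht') (or_introl eq_refl) H).
    pose proof (dist2_tri t' r t). rewrite (dist2_sym r t) in H1.
    replace (C * (2 + D)) with (2 * a) in H0 by (unfold a; field). lra. }
  destruct (nat_above (lsum (fun t' => dist2 t' r) T / a)) as [N HN].
  assert (Hnear : forall t', In t' T -> dist2 t' r < INR (S (S N)) * a).
  { intros t' Ht'.
    pose proof (lsum_ge_elem (fun t' => dist2 t' r) T t' (fun q _ => dist2_pos q r) Ht').
    cbv beta in H.
    assert (lsum (fun t' => dist2 t' r) T < INR N * a).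
    { apply (Rmult_lt_reg_r (/a)). apply Rinv_0_lt_compat; lra.
      replace (INR N * a * / a) with (INR N) by (field; lra). exact HN. }
    rewrite !S_INR. lra. }
  assert (HE : lsum h T <= s).
  { eapply Rle_trans.
    { apply (lsum_le h (fun t' => sum_n (fun n => Dl alpha a n * ind a (dist2 t' r) n) N + G alpha a (S N))).
      intros t' Ht'. apply per_point; auto. }
    rewrite lsum_plus, lsum_const.
    rewrite (lsum_sum_n (fun n t' => Dl alpha a n * ind a (dist2 t' r) n)).
    assert (Hlen : INR (length T) = lsum (fun t' => ind a (dist2 t' r) N) T).
    { rewrite <- (Rmult_1_r (INR (length T))). rewrite <- lsum_const. apply lsum_ext.
      intros p Hp. unfold ind, indb. destruct (Rlt_dec (dist2 p r) (INR (S (S N)) * a)); auto.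
      exfalso. apply n. auto. }
    pose proof (count_bound C D t r T N HC HD HDC) as HcN. fold a in HcN. rewrite <- Hlen in HcN.
    assert (HG : 0 <= G alpha a (S N)) by (left; apply f_pos).
    eapply Rle_trans with (sum_n (fun n => Mc n * Dl alpha a n) N + Mc N * G alpha a (S N)).
    { apply Rplus_le_compat; [| nra].
      apply sum_n_le'. intros n. rewrite lsum_scal.
      pose proof (count_bound C D t r T n HC HD HDC) as Hc. fold a in Hc.
      pose proof (Dl_nonneg alpha a Hal Ha n). nra. }
    rewrite <- abel.
    eapply Rle_trans; [| apply (series_partial _ s N Hs)].
    - right. apply sum_n_ext. intros n. cbv zeta. unfold G, eta_pow.
      replace (1 + INR (S n) * C * (1 + D / 2)) with (1 + INR (S n) * a) by (unfold a; field). reflexivity.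
    - intros n. cbv zeta. apply Rdiv_le_0_compat. pose proof (pos_INR (S n)). lra. apply Rpower_pos. }
  assert (HE0 : 0 <= lsum h T) by (apply lsum_nonneg; intros; left; apply f_pos).
  assert (Hf0 : e <= eta_pow alpha (dist2 t r)).
  { rewrite He. apply (f_dec alpha Hal (dist2 t r) C). split; [apply dist2_pos| auto]. }
  unfold SINR. rewrite lsum_scal. fold h.
  apply Rle_div_r. nra.
  assert (H1 : P * beta * lsum h T <= P * beta * s) by (apply Rmult_le_compat_l; nra).
  assert (H2 : P * e <= P * eta_pow alpha (dist2 t r)) by (apply Rmult_le_compat_l; lra).
  assert (H3 : P * e - P * beta * s = beta * No) by (rewrite <- HPe; ring).
  replace (beta * (No + P * lsum h T)) with (beta * No + P * beta * lsum h T) by ring.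
  lra.
Qed.
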